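(* Assume $a/b>\sqrt{2}$. Every self-intersected 4-periodic of the elliptic billiard $x^2/a^2+y^2/b^2=1$ has perimeter $$L=\frac{4a^2}{c},\qquad c^2=a^2-b^2.$$ In particular the perimeter is the same for all members of the family.
   Context: The elliptic billiard is the ellipse $\mathcal{E}: x^2/a^2+y^2/b^2=1$ with $a>b>0$. Let $c=\sqrt{a^2-b^2}$; the foci are $f_{1}=(-c,0)$ and $f_{2}=(c,0)$. An $N$-periodic is a closed billiard trajectory with $N$ bounces $P_1,\dots,P_N\in\mathcal{E}$: at each $P_i$ the normal to $\mathcal{E}$ bisects the angle between the segments $P_{i-1}P_i$ and $P_iP_{i+1}$ (indices mod $N$). All segments of such a trajectory are tangent to a fixed conic confocal with $\mathcal{E}$ (the caustic). Self-intersected 4-periodics: for $a/b>\sqrt2$ these are the 4-periodics whose caustic is the confocal hyperbola $x^2/a''^2-y^2/b''^2=1$ with $a''=a\sqrt{a^2-2b^2}/c$ and $b''=b^2/c$. They form a one-parameter family which can be parametrized by $u$ with $|u|\le u_{\max}:=\frac{a}{c^2}\sqrt{a^2-2b^2}$ via $P_1=(au,\,b\sqrt{1-u^2})$, $P_3=(-au,\,b\sqrt{1-u^2})$, $P_2=\left(-\frac{a\sqrt{a^2(a^2-2b^2)-c^4u^2}}{c^2\sqrt{1-u^2}},\,-\frac{b^3}{c^2\sqrt{1-u^2}}\right)$, $P_4=\left(\frac{a\sqrt{a^2(a^2-2b^2)-c^4u^2}}{c^2\sqrt{1-u^2}},\,-\frac{b^3}{c^2\sqrt{1-u^2}}\right)$.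 The perimeter is $|P_1P_2|+|P_2P_3|+|P_3P_4|+|P_4P_1|$. *)

(* Defs.v *)
From Stdlib Require Import Reals Lra.
Open Scope R_scope.

Definition dist (P Q : R * R) : R :=
  sqrt ((fst P - fst Q) ^ 2 + (snd P - snd Q) ^ 2).

Definition cfoc (a b : R) : R := sqrt (a ^ 2 - b ^ 2).

Definition umax (a b : R) : R :=
  a / (cfoc a b) ^ 2 * sqrt (a ^ 2 - 2 * b ^ 2).

(* The parametrization of the self-intersected 4-periodics (paper's formulas). *)
Definition P1 (a b u : R) : R * R := (a * u, b * sqrt (1 - u ^ 2)).
Definition P3 (a b u : R) : R * R := (- (a * u), b * sqrt (1 - u ^ 2)).
Definition P2 (a b u : R) : R * R :=
  (- (a * sqrt (a ^ 2 * (a ^ 2 - 2 * b ^ 2) - (cfoc a b) ^ 4 * u ^ 2))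
      / ((cfoc a b) ^ 2 * sqrt (1 - u ^ 2)),
   - (b ^ 3) / ((cfoc a b) ^ 2 * sqrt (1 - u ^ 2))).
Definition P4 (a b u : R) : R * R :=
  ((a * sqrt (a ^ 2 * (a ^ 2 - 2 * b ^ 2) - (cfoc a b) ^ 4 * u ^ 2))
      / ((cfoc a b) ^ 2 * sqrt (1 - u ^ 2)),
   - (b ^ 3) / ((cfoc a b) ^ 2 * sqrt (1 - u ^ 2))).

Definition perimeter4 (a b u : R) : R :=
  dist (P1 a b u) (P2 a b u) + dist (P2 a b u) (P3 a b u)
  + dist (P3 a b u) (P4 a b u) + dist (P4 a b u) (P1 a b u).

(* Main.v *)
Require Import Defs.
From Stdlib Require Import Reals Lra Psatz.
Open Scope R_scope.

Lemma key (a b c s u w : R) : c > 0 -> s > 0 -> u^2 = 1 - s^2 -> a^2 = c^2 + b^2 ->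
  w^2 = c^4*s^2 - b^4 ->
  (a*u + a*w/(c^2*s))^2 + (b*s + b^3/(c^2*s))^2 = ((a^2*s+u*w)/(c*s))^2.
Proof.
  intros Hc Hs Hu Ha Hw.
  assert (E : a^2*u^2*c^4*s^2 + a^2*w^2 + b^2*(c^2*s^2+b^2)^2
              = c^2*(a^2)^2*s^2 + c^2*u^2*w^2).
  { rewrite Hw, Hu, Ha; ring. }
  assert (N : a^2*(u*c^2*s+w)^2 + b^2*(c^2*s^2+b^2)^2 = c^2*(a^2*s+u*w)^2).
  { transitivity (a^2*u^2*c^4*s^2 + a^2*w^2 + b^2*(c^2*s^2+b^2)^2
                  + 2*a^2*u*c^2*s*w); [ring|].
    rewrite E; ring. }
  transitivity ((a^2*(u*c^2*s+w)^2 + b^2*(c^2*s^2+b^2)^2)/(c^4*s^2)).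
  { field; lra. }
  rewrite N. field; lra.
Qed.

Theorem mainTheorem1 (a b u : R) :
  0 < b -> b < a -> a / b > sqrt 2 ->
  Rabs u <= umax a b ->
  perimeter4 a b u = 4 * a ^ 2 / cfoc a b.
Proof.
  intros Hb Hab Hr Hu.
  assert (Hs2 : sqrt 2 * sqrt 2 = 2) by (apply sqrt_sqrt; lra).
  assert (Hs2p : 0 < sqrt 2) by (apply sqrt_lt_R0; lra).
  assert (Ha2 : a^2 > 2*b^2).
  { assert (a > sqrt 2 * b).
    { apply Rmult_gt_compat_r with (r:=b) in Hr; [|lra].
      unfold Rdiv in Hr. rewrite Rmult_assoc, Rinv_l in Hr; lra. }
    assert (sqrt 2 * b > 0) by nra.
    assert (a*a > (sqrt 2*b)*(sqrt 2*b)) by nra.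
    replace ((sqrt 2*b)*(sqrt 2*b)) with (sqrt 2 * sqrt 2 * b^2) in H1 by ring.
    rewrite Hs2 in H1. nra. }
  unfold perimeter4, umax in *.
  set (c := cfoc a b) in *.
  assert (Hc2 : c^2 = a^2 - b^2) by (unfold c, cfoc; apply pow2_sqrt; nra).
  assert (Hcp : c > 0) by (unfold c, cfoc; apply sqrt_lt_R0; nra).
  assert (Hq : sqrt (a^2 - 2*b^2)^2 = a^2 - 2*b^2) by (apply pow2_sqrt; nra).
  assert (Hq0 : 0 <= sqrt (a^2 - 2*b^2)) by apply sqrt_pos.
  assert (Hum0 : 0 <= a / c^2 * sqrt (a^2 - 2*b^2)).
  { apply Rmult_le_pos; [|lra]. apply Rmult_le_pos; [lra|].
    left; apply Rinv_0_lt_compat; nra. }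
  assert (Huu : u^2 <= (a / c^2 * sqrt (a^2 - 2*b^2))^2).
  { rewrite <- (pow2_abs u). pose proof (Rabs_pos u). nra. }
  assert (Huu2 : c^4*u^2 <= a^2*(a^2-2*b^2)).
  { rewrite Rpow_mult_distr, Hq in Huu.
    replace ((a/c^2)^2) with (a^2/c^4) in Huu by (field; lra).
    apply Rmult_le_compat_l with (r := c^4) in Huu; [|nra].
    replace (c^4 * (a^2/c^4 * (a^2-2*b^2))) with (a^2*(a^2-2*b^2)) in Huu
      by (field; lra). exact Huu. }
  assert (Hc4 : c^4 = (a^2-b^2)^2) by (rewrite <- Hc2; ring).
  assert (Hu1 : u^2 < 1).
  { assert (a^2*(a^2-2*b^2) = c^4 - b^4) by (rewrite Hc4; ring).
    assert (b^4 > 0) by (apply pow_lt; lra).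
    assert (c^4 > 0) by (apply pow_lt; lra).
    assert (c^4 * u^2 < c^4 * 1) by lra.
    apply Rmult_lt_reg_l in H2; lra. }
  set (s := sqrt (1 - u^2)).
  assert (Hss : s^2 = 1 - u^2) by (unfold s; apply pow2_sqrt; lra).
  assert (Hsp : s > 0) by (unfold s; apply sqrt_lt_R0; lra).
  set (w := sqrt (a^2*(a^2-2*b^2) - c^4*u^2)).
  assert (Hww : w^2 = a^2*(a^2-2*b^2) - c^4*u^2) by (unfold w; apply pow2_sqrt; lra).
  assert (Hw0 : 0 <= w) by apply sqrt_pos.
  assert (Hw2 : w^2 = c^4*s^2 - b^4) by (rewrite Hww, Hss, Hc4; ring).
  assert (HA : a^2 = c^2 + b^2) by lra.
  assert (Hbnd : u^2*w^2 <= (a^2*s)^2).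
  { assert (w^2 <= c^4*s^2) by nra.
    assert (c^4 <= (a^2)^2) by (rewrite Hc4; nra).
    assert (u^2*w^2 <= w^2) by nra.
    assert (c^4*s^2 <= (a^2)^2*s^2) by nra. nra. }
  assert (Hpos1 : 0 <= a^2*s + u*w).
  { destruct (Rle_or_lt 0 (a^2*s + u*w)); auto.
    assert (a^2*s > 0) by nra. nra. }
  assert (Hpos2 : 0 <= a^2*s - u*w).
  { destruct (Rle_or_lt 0 (a^2*s - u*w)); auto.
    assert (a^2*s > 0) by nra. nra. }
  assert (Hu' : (-u)^2 = 1 - s^2) by (replace ((-u)^2) with (u^2) by ring; lra).
  assert (Hu0 : u^2 = 1 - s^2) by lra.
  assert (K1 := key a b c s u w Hcp Hsp Hu0 HA Hw2).
  assert (K2 := key a b c s (-u) w Hcp Hsp Hu' HA Hw2).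
  assert (D1 : forall X, X = (a*u + a*w/(c^2*s))^2 + (b*s + b^3/(c^2*s))^2 ->
                 sqrt X = (a^2*s+u*w)/(c*s)).
  { intros X ->. rewrite K1. apply sqrt_pow2.
    apply Rmult_le_pos; [lra|]. left; apply Rinv_0_lt_compat; nra. }
  assert (D2 : forall X, X = (a*(-u) + a*w/(c^2*s))^2 + (b*s + b^3/(c^2*s))^2 ->
                 sqrt X = (a^2*s+(-u)*w)/(c*s)).
  { intros X ->. rewrite K2. apply sqrt_pow2.
    apply Rmult_le_pos; [lra|]. left; apply Rinv_0_lt_compat; nra. }
  unfold P1, P2, P3, P4.
  fold c s w. unfold Defs.dist; cbn [fst snd].
  rewrite (D1 ((a*u - - (a*w)/(c^2*s))^2 + (b*s - - b^3/(c^2*s))^2)) by (field; lra).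
  rewrite (D2 ((- (a*w)/(c^2*s) - - (a*u))^2 + (- b^3/(c^2*s) - b*s)^2)) by (field; lra).
  rewrite (D1 ((- (a*u) - a*w/(c^2*s))^2 + (b*s - - b^3/(c^2*s))^2)) by (field; lra).
  rewrite (D2 ((a*w/(c^2*s) - a*u)^2 + (- b^3/(c^2*s) - b*s)^2)) by (field; lra).
  field_simplify; [|lra|lra].
  rewrite HA. field. lra.
Qed.
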